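(* Let $T$ be the DFS tree produced by DFS-v1 or DFS-v2 on a temporal graph $G$ from source $s$ with starting time $t_s$. Then no root-to-leaf path of $T$ contains two distinct occurrences of the same vertex of $G$; equivalently, no vertex of $G$ is, along a single root-to-leaf path, both an ancestor and a descendant of an occurrence of another vertex.
   Context: A temporal graph is a pair $G=(V,E)$ where $V$ is a finite set of vertices and $E$ is a finite set of temporal edges, i.e. triples $(u,v,t)$ with $u,v\in V$, $u\neq v$, $t\in\mathbb{R}$ (the time at which the edge is active); distinct elements of $E$ are distinct triples. Fix a starting time $t_s\in\mathbb{R}$ and a source vertex $s\in V$. Temporal DFS (versions v1 and v2). The procedure maintains a value $\sigma(x)\in\mathbb{R}\cup\{\infty\}$ for every $x\in V$, initially $\infty$, and a set of already traversed edges, initially empty, and builds a rooted tree $T$ whose nodes are occurrences of vertices of $G$ (a vertex may occur several times in $T$). Each occurrence carries a label, namely the value assigned to $\sigma(x)$ when that occurrence was created. Start: create the root occurrence of $s$, set $\sigma(s)=t_s$ (its label), and make it the current occurrence. Step (a): let $u$ be the vertex of the current occurrence, $\sigma_u$ its label, and $A$ the set of edges $(u,v,t)\in E$ not yet traversed with $\sigma_u\le t$. If $A=\emptyset$: if the current occurrence is the root, terminate; otherwise make its parent occurrence current (backtrack) and repeat step (a). If $A\neq\emptyset$, select an edge $e=(u,v,t)\in A$ by the selection rule, mark $e$ as traversed and go to step (b). Step (b): if the current value $\sigma(v)$ satisfies $\sigma(v)>t$, create a new occurrence of $v$ as a child of the current occurrence, set $\sigma(v):=t$ (so the new occurrence has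 label $t$), call $e$ a tree edge, make the new occurrence current and go to step (a); otherwise go to step (a) with the same current occurrence. Selection rule of DFS-v1: choose any vertex $v$ such that $A$ contains an edge to $v$, and select the edge of $A$ to $v$ with the smallest time. Selection rule of DFS-v2: select an edge of $A$ with the largest time. All remaining choices are arbitrary. $T$ is the DFS tree; its edges are the tree edges. *)

(* Defs.v *)
From Stdlib Require Import Reals List Relations.
Import ListNotations.
Open Scope R_scope.
Set Implicit Arguments.

Definition tedge (V : Type) := (V * V * R)%type.

(* An occurrence of a vertex in the DFS tree: vertex, label, parent index
   (occurrences are numbered by their position in the list of occurrences;
   the root has index 0 and no parent). *)
Record occ (V : Type) := mkOcc { o_vert : V; o_label : R; o_parent : option nat }.

(* State of the temporal DFS: occurrences created so far (the tree T),
   current occurrence, the values sigma (None = infinity), traversed edges. *)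
Record state (V : Type) := mkState {
  occs : list (occ V);
  cur : nat;
  sigma : V -> option R;
  trav : list (tedge V) }.

Inductive dfs_rule := DFSv1 | DFSv2.

Section DFS.
Variable V : Type.
Variable Veq : forall x y : V, {x = y} + {x <> y}.

Definition upd (f : V -> option R) (v : V) (t : R) : V -> option R :=
  fun x => if Veq x v then Some t else f x.

Definition avail (E : list (tedge V)) (st : state V) (o : occ V) (e : tedge V) : Prop :=
  In e E /\ ~ In e (trav st) /\
  (let '(u, _, t) := e in u = o_vert o /\ o_label o <= t).

Definition selected (r : dfs_rule) (E : list (tedge V)) (st : state V) (o : occ V)
  (e : tedge V) : Prop :=
  avail E st o e /\
  match r with
  | DFSv1 => forall e', avail E st o e' -> snd (fst e') = snd (fst e) -> snd e <= snd e'
  | DFSv2 => forall e', avail E st o e' -> snd e' <= snd e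
  end.

Definition sigma_gt (x : option R) (t : R) : Prop :=
  match x with None => True | Some y => t < y end.

Definition init_state (s : V) (ts : R) : state V :=
  mkState [mkOcc s ts None] 0 (upd (fun _ => None) s ts) [].

Inductive dfs_step (r : dfs_rule) (E : list (tedge V)) : state V -> state V -> Prop :=
| step_back : forall st o p,
    nth_error (occs st) (cur st) = Some o ->
    (forall e, ~ avail E st o e) ->
    o_parent o = Some p ->
    dfs_step r E st (mkState (occs st) p (sigma st) (trav st))
| step_tree : forall st o u v t,
    nth_error (occs st) (cur st) = Some o ->
    selected r E st o (u, v, t) ->
    sigma_gt (sigma st v) t ->
    dfs_step r E st
      (mkState (occs st ++ [mkOcc v t (Some (cur st))]) (length (occs st))
               (upd (sigma st) v t) ((u, v, t) :: trav st))
| step_nontree : forall st o u v t,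
    nth_error (occs st) (cur st) = Some o ->
    selected r E st o (u, v, t) ->
    ~ sigma_gt (sigma st v) t ->
    dfs_step r E st (mkState (occs st) (cur st) (sigma st) ((u, v, t) :: trav st)).

Definition terminal (E : list (tedge V)) (st : state V) : Prop :=
  exists o, nth_error (occs st) (cur st) = Some o /\ o_parent o = None /\
            (forall e, ~ avail E st o e).

End DFS.

Definition parent_of (V : Type) (l : list (occ V)) (i j : nat) : Prop :=
  exists o, nth_error l j = Some o /\ o_parent o = Some i.

Definition ancestor (V : Type) (l : list (occ V)) : nat -> nat -> Prop :=
  clos_trans nat (parent_of l).

(* Main.v *)
Require Import Defs.
From Stdlib Require Import Reals List Relations Lia Lra.
Import ListNotations.
Open Scope R_scope.

Definition parents_ok (V : Type) (l : list (occ V)) : Prop :=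
  forall j o p, nth_error l j = Some o -> o_parent o = Some p ->
    (p < j)%nat /\ exists op, nth_error l p = Some op /\ o_label op <= o_label o.

Lemma anc_mono (V : Type) (l : list (occ V)) (Hp : @parents_ok V l) :
  forall i j, ancestor l i j -> (i < j)%nat /\
    forall oi oj, nth_error l i = Some oi -> nth_error l j = Some oj ->
      o_label oi <= o_label oj.
Proof.
  intros i j H. induction H as [x y [o [Ho Hpar]]| x y z H1 IH1 H2 IH2].
  - destruct (Hp _ _ _ Ho Hpar) as [Hlt [op [Hop Hle]]]. split; [exact Hlt|].
    intros oi oj Hi Hj. rewrite Hi in Hop. rewrite Hj in Ho.
    injection Hop as ->. injection Ho as ->. exact Hle.
  - destruct IH1 as [l1 IH1], IH2 as [l2 IH2]. split; [lia|].
    intros oi oj Hi Hj.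
    destruct (nth_error l y) as [oy|] eqn:Hy.
    + specialize (IH1 _ _ Hi eq_refl). specialize (IH2 _ _ eq_refl Hj). lra.
    + exfalso. apply nth_error_None in Hy.
      assert (nth_error l z <> None) by congruence.
      apply nth_error_Some in H. lia.
Qed.

Lemma anc_app (V : Type) (l : list (occ V)) x (Hp : @parents_ok V (l ++ [x])) :
  forall i j, ancestor (l ++ [x]) i j -> (j < length l)%nat ->
    ancestor l i j /\ (i < j)%nat.
Proof.
  intros i j H. induction H as [a b [o [Ho Hpar]]| a b c H1 IH1 H2 IH2]; intros Hlt.
  - destruct (Hp _ _ _ Ho Hpar) as [Hab _].
    rewrite nth_error_app1 in Ho by exact Hlt.
    split; [|exact Hab]. apply t_step. exists o; auto.
  - destruct (IH2 Hlt) as [A2 L2]. destruct (IH1 ltac:(lia)) as [A1 L1].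
    split; [eapply t_trans; eauto | lia].
Qed.

Arguments anc_mono {V l} Hp {i j}.
Arguments anc_app {V l x} Hp {i j}.

Section Inv.
Variable V : Type.
Variable Veq : forall x y : V, {x = y} + {x <> y}.
Variable E : list (tedge V).
Variable r : dfs_rule.
Variable HEloop : forall u v t, In (u, v, t) E -> u <> v.

Definition inv (st : state V) : Prop :=
  (cur st < length (occs st))%nat /\
  @parents_ok V (occs st) /\
  (forall j o, nth_error (occs st) j = Some o ->
     exists y, Defs.sigma st (o_vert o) = Some y /\ y <= o_label o) /\
  (forall i j oi oj, ancestor (occs st) i j -> nth_error (occs st) i = Some oi ->
     nth_error (occs st) j = Some oj -> o_vert oi <> o_vert oj).

Lemma inv_init s ts : inv (init_state Veq s ts).
Proof.
  unfold inv, init_state; simpl. split; [lia|]. split; [|split].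
  - intros j o p Ho Hp. destruct j as [|[|j]]; simpl in Ho; try discriminate.
    injection Ho as <-. discriminate.
  - intros j o Ho. destruct j as [|[|j]]; simpl in Ho; try discriminate.
    injection Ho as <-. simpl. unfold upd. destruct (Veq s s); [|congruence].
    exists ts; split; [reflexivity|lra].
  - intros i j oi oj H. exfalso. induction H as [a b [o [Ho Hp]]|]; auto.
    destruct b as [|[|b]]; simpl in Ho; try discriminate.
    injection Ho as <-. discriminate.
Qed.

Lemma inv_step st st' : dfs_step Veq r E st st' -> inv st -> inv st'.
Proof.
  intros Hs [Hc [Hp [Hsig Hanc]]]. destruct Hs as
    [st o p Ho Hna Hpar | st o u v t Ho Hsel Hgt | st o u v t Ho Hsel Hgt].
  - unfold inv; simpl. destruct (Hp _ _ _ Ho Hpar) as [Hlt _].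
    split; [lia|]. auto.
  - destruct Hsel as [[HinE [Hntr [Hu Hlab]]] _].
    set (x := mkOcc v t (Some (cur st))).
    assert (Hp' : @parents_ok V (occs st ++ [x])).
    { intros j o' p Ho' Hpar'.
      destruct (Nat.lt_ge_cases j (length (occs st))) as [Hj|Hj].
      - rewrite nth_error_app1 in Ho' by exact Hj.
        destruct (Hp _ _ _ Ho' Hpar') as [Hlt [op [Hop Hle]]].
        split; [exact Hlt|]. exists op. split; [|exact Hle].
        rewrite nth_error_app1 by lia. exact Hop.
      - rewrite nth_error_app2 in Ho' by exact Hj.
        destruct (j - length (occs st))%nat as [|k] eqn:Hk; simpl in Ho'.
        + injection Ho' as <-. simpl in Hpar'. injection Hpar' as <-.
          split; [lia|]. exists o. split; [rewrite nth_error_app1 by lia; exact Ho|].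
          simpl. exact Hlab.
        + destruct k; discriminate. }
    unfold inv; simpl. split; [rewrite length_app; simpl; lia|].
    split; [exact Hp'|]. split.
    + intros j o' Ho'. unfold upd.
      destruct (Nat.lt_ge_cases j (length (occs st))) as [Hj|Hj].
      * rewrite nth_error_app1 in Ho' by exact Hj.
        destruct (Hsig _ _ Ho') as [y [Hy Hyl]].
        destruct (Veq (o_vert o') v) as [Heq|Hne].
        -- exists t. split; [reflexivity|]. rewrite Heq in Hy. rewrite Hy in Hgt.
           simpl in Hgt. lra.
        -- exists y. auto.
      * rewrite nth_error_app2 in Ho' by exact Hj.
        destruct (j - length (occs st))%nat as [|k] eqn:Hk; simpl in Ho'.
        -- injection Ho' as <-. simpl. destruct (Veq v v); [|congruence].
           exists t. split; [reflexivity|lra].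
        -- destruct k; discriminate.
    + intros i j oi oj H Hi Hj.
      destruct (Nat.lt_ge_cases j (length (occs st))) as [Hjl|Hjl].
      * destruct (anc_app Hp' H Hjl) as [Hal Hij].
        rewrite nth_error_app1 in Hi by lia. rewrite nth_error_app1 in Hj by lia.
        exact (Hanc _ _ _ _ Hal Hi Hj).
      * assert (Hjx : j = length (occs st) /\ oj = x).
        { rewrite nth_error_app2 in Hj by exact Hjl.
          destruct (j - length (occs st))%nat as [|k] eqn:Hk; simpl in Hj.
          - injection Hj as <-. split; [lia|reflexivity].
          - destruct k; discriminate. }
        destruct Hjx as [-> ->]. simpl.
        assert (Hic : i = cur st \/ ancestor (occs st) i (cur st)).
        { apply clos_trans_tn1 in H. inversion H as [b Hpb | b c Hpb Hrest]; subst.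
          - destruct Hpb as [o' [Ho' Hpar']].
            rewrite nth_error_app2 in Ho' by lia. rewrite Nat.sub_diag in Ho'.
            simpl in Ho'. injection Ho' as <-. simpl in Hpar'. injection Hpar' as <-.
            left; reflexivity.
          - destruct Hpb as [o' [Ho' Hpar']].
            rewrite nth_error_app2 in Ho' by lia. rewrite Nat.sub_diag in Ho'.
            simpl in Ho'. injection Ho' as <-. simpl in Hpar'. injection Hpar' as <-.
            right. apply clos_tn1_trans in Hrest.
            exact (proj1 (anc_app Hp' Hrest Hc)). }
        rewrite nth_error_app1 in Hi.
        2:{ destruct Hic as [->|Ha]; [exact Hc|].
            pose proof (proj1 (anc_mono Hp Ha)). lia. }
        assert (Hli : o_label oi <= o_label o).
        { destruct Hic as [->|Ha].
          - rewrite Hi in Ho. injection Ho as ->. lra.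
          - exact (proj2 (anc_mono Hp Ha) _ _ Hi Ho). }
        intros Heq. destruct (Hsig _ _ Hi) as [y [Hy Hyl]].
        rewrite Heq in Hy. rewrite Hy in Hgt. simpl in Hgt. lra.
  - unfold inv; simpl. auto.
Qed.

End Inv.

Theorem lemma4 (V : Type) (Veq : forall x y : V, {x = y} + {x <> y})
  (Vl : list V) (HVfin : forall x : V, In x Vl)
  (E : list (tedge V)) (HEnodup : NoDup E)
  (HEloop : forall u v t, In (u, v, t) E -> u <> v)
  (s : V) (ts : R) (r : dfs_rule) (st : state V)
  (Hrun : clos_refl_trans_1n (state V) (dfs_step Veq r E) (init_state Veq s ts) st)
  (Hterm : terminal E st) :
  forall (i j : nat) (oi oj : occ V),
    ancestor (occs st) i j ->
    nth_error (occs st) i = Some oi ->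
    nth_error (occs st) j = Some oj ->
    o_vert oi <> o_vert oj.
Proof.
  assert (Hinv : @inv V (init_state Veq s ts)) by apply inv_init.
  revert Hinv. clear Hterm.
  induction Hrun as [|x y z Hxy Hyz IH]; intros Hinv.
  - exact (proj2 (proj2 (proj2 Hinv))).
  - apply IH. eapply inv_step; eauto.
Qed.
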